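(* Let $F$ be a field with $\mathrm{char}\,F\neq 2$, and let $I_n$ be the $F$-algebra defined in the context. (a) If $F$ is totally real, then for every $n\ge1$ and every $\lambda\in F$, every Rota--Baxter operator of weight $\lambda$ on $I_n$ is trivial, i.e. equals $0$ or $-\lambda\,\mathrm{id}$. (b) If $F$ is quadratically closed, then for every $n\ge 2$ and every nonzero $\lambda\in F$ there exists a nontrivial Rota--Baxter operator of weight $\lambda$ on $I_n$ (i.e. one different from $0$ and $-\lambda\,\mathrm{id}$), and for every $n\ge 3$ there exists a nonzero Rota--Baxter operator of weight $0$ on $I_n$.
   Context: $I_n$ denotes the $n$-dimensional (non-associative) algebra over $F$ with basis $e_1,\ldots,e_n$ and multiplication given by $e_n\cdot e_n=2e_n$, $e_n\cdot e_j=e_j$, $e_j\cdot e_j=e_n$ for $j=1,\ldots,n-1$, with all other products of basis elements equal to zero (extended bilinearly). A linear operator $R\colon A\to A$ is a Rota--Baxter operator of weight $\lambda\in F$ if $R(x)R(y)=R(R(x)y+xR(y)+\lambda xy)$ for all $x,y\in A$. The operators $0$ and $-\lambda\,\mathrm{id}$ are always Rota--Baxter operators of weight $\lambda$ and are called trivial. A field $F$ is totally real if $\nu_1^2+\cdots+\nu_t^2=0$ with $\nu_i\in F$ implies $\nu_1=\cdots=\nu_t=0$. A field is quadratically closed if every quadratic equation over it has a solution in it. *)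

(* Defs.v *)
From HB Require Import structures.
From mathcomp Require Import all_boot all_order all_algebra.
Set Implicit Arguments. Unset Strict Implicit. Unset Printing Implicit Defensive.
Import GRing.Theory.
Local Open Scope ring_scope.

(* The algebra I_n is modelled on coordinate row vectors 'rV[F]_n; the basis
   vector e_(k+1) is the k-th coordinate vector (k : 'I_n), so e_n is the
   last coordinate [ord_max].  We take n = m.+1 to have e_n available. *)

Definition In_basis_mul (F : fieldType) (m : nat) (i j : 'I_m.+1) : 'rV[F]_m.+1 :=
  if (i == ord_max) && (j == ord_max) then 2%:R *: delta_mx 0 ord_max
  else if i == ord_max then delta_mx 0 j
  else if i == j then delta_mx 0 ord_max
  else 0.

Definition In_mul (F : fieldType) (m : nat) (x y : 'rV[F]_m.+1) : 'rV[F]_m.+1 :=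
  \sum_(i < m.+1) \sum_(j < m.+1) (x 0 i * y 0 j) *: In_basis_mul F i j.

Definition is_RB (F : fieldType) (m : nat) (lam : F)
    (R : {linear 'rV[F]_m.+1 -> 'rV[F]_m.+1}) : Prop :=
  forall x y : 'rV[F]_m.+1,
    In_mul (R x) (R y) = R (In_mul (R x) y + In_mul x (R y) + lam *: In_mul x y).

Definition is_trivial_RB (F : fieldType) (m : nat) (lam : F)
    (R : {linear 'rV[F]_m.+1 -> 'rV[F]_m.+1}) : Prop :=
  (forall x, R x = 0) \/ (forall x, R x = - (lam *: x)).

Definition totally_real (F : fieldType) : Prop :=
  forall (t : nat) (nu : 'I_t -> F), \sum_(i < t) nu i ^+ 2 = 0 -> forall i, nu i = 0.

Definition quadratically_closed (F : fieldType) : Prop :=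
  forall a b c : F, a != 0 -> exists x : F, a * x ^+ 2 + b * x + c = 0.

(* Main.v *)
Require Import Defs.
From HB Require Import structures.
From mathcomp Require Import all_boot all_order all_algebra.
From mathcomp Require Import ring.
Set Implicit Arguments. Unset Strict Implicit. Unset Printing Implicit Defensive.
Import GRing.Theory.
Local Open Scope ring_scope.

Section S.
Variables (F : fieldType) (m : nat).
Local Notation V := 'rV[F]_m.+1.
Definition ee : V := locked (delta_mx 0 ord_max : V).
Lemma eeE : ee = delta_mx 0 ord_max. Proof. by rewrite /ee -lock. Qed.
Definition dot (x y : V) : F := \sum_i x 0 i * y 0 i.

Lemma In_basis_mulE (i j : 'I_m.+1) : In_basis_mul F i j =
  (i == ord_max)%:R *: delta_mx 0 j + (i == j)%:R *: delta_mx 0 ord_max.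
Proof.
rewrite /In_basis_mul; case: (eqVneq i ord_max) => [->|ni];
  case: (eqVneq j ord_max) => [->|nj] /=.
- by rewrite scale1r scaler_nat mulr2n.
- by rewrite scale1r scale0r addr0.
- by rewrite scale0r add0r; case: eqP => _; rewrite ?scale0r ?scale1r.
- by rewrite scale0r add0r; case: eqP => _; rewrite ?scale0r ?scale1r.
Qed.

Lemma In_mulE (x y : V) : In_mul x y = x 0 ord_max *: y + dot x y *: ee.
Proof.
rewrite /In_mul.
under eq_bigr do under eq_bigr do rewrite In_basis_mulE scalerDr.
under eq_bigr do rewrite big_split /=.
rewrite big_split /=; congr (_ + _).
  rewrite (bigD1 ord_max) //= [X in _ + X]big1 ?addr0; last first.
    move=> i ni; apply: big1 => j _; by rewrite (negbTE ni) scale0r scaler0.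
  rewrite [in RHS](row_sum_delta y) scaler_sumr; apply: eq_bigr => j _.
  by rewrite eqxx scale1r scalerA.
rewrite /dot eeE scaler_suml; apply: eq_bigr => i _.
rewrite (bigD1 i) //= [X in _ + X]big1 ?addr0; last first.
  by move=> j /negbTE; rewrite eq_sym => ->; rewrite scale0r scaler0.
by rewrite eqxx scale1r.
Qed.

Lemma dotC x y : dot x y = dot y x.
Proof. by apply: eq_bigr => i _; rewrite mulrC. Qed.
Lemma dotDl x y z : dot (x + y) z = dot x z + dot y z.
Proof. by rewrite /dot -big_split; apply: eq_bigr => i _; rewrite mxE mulrDl. Qed.
Lemma dotZl a x z : dot (a *: x) z = a * dot x z.
Proof. by rewrite /dot mulr_sumr; apply: eq_bigr => i _; rewrite mxE mulrA. Qed.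
Lemma dotDr x y z : dot z (x + y) = dot z x + dot z y.
Proof. by rewrite dotC dotDl !(dotC z). Qed.
Lemma dotZr a x z : dot z (a *: x) = a * dot z x.
Proof. by rewrite dotC dotZl dotC. Qed.
Lemma dot_deltal k y : dot (delta_mx 0 k) y = y 0 k.
Proof.
rewrite /dot (bigD1 k) //= [X in _ + X]big1 ?addr0; first by rewrite mxE !eqxx mul1r.
by move=> i ni; rewrite mxE (negbTE ni) andbF mul0r.
Qed.
Lemma dot_deltar k y : dot y (delta_mx 0 k) = y 0 k.
Proof. by rewrite dotC dot_deltal. Qed.

Definition RBc (lam : F) (R : V -> V) := forall x y : V,
  dot (R x) (R y) *: ee = (dot (R x) y + dot x (R y) + lam * dot x y) *: R ee
     + x 0 ord_max *: (R (R y) + lam *: R y).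

Lemma RB_iff lam (R : {linear V -> V}) : is_RB lam R <-> RBc lam R.
Proof.
have key : forall x y, R (In_mul (R x) y + In_mul x (R y) + lam *: In_mul x y)
  = R x 0 ord_max *: R y + ((dot (R x) y + dot x (R y) + lam * dot x y) *: R ee
     + x 0 ord_max *: (R (R y) + lam *: R y)).
  move=> x y; rewrite !In_mulE !linearD !linearZ /= ?linearD ?linearZ /=.
  by apply/rowP => k; rewrite !mxE; ring.
split=> H x y; have := H x y; rewrite key !In_mulE.
  by move/addrI.
by move=> ->.
Qed.

Lemma dot0l y : dot 0 y = 0.
Proof. by rewrite -(scale0r (0:V)) dotZl mul0r. Qed.
Lemma ee_max : ee 0 ord_max = 1.
Proof. by rewrite eeE mxE !eqxx. Qed.
Lemma ee_ne k : k != ord_max -> ee 0 k = 0.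
Proof. by move=> nk; rewrite eeE mxE (negbTE nk). Qed.
Lemma dot_ee x : dot x ee = x 0 ord_max.
Proof. by rewrite eeE dot_deltar. Qed.

Lemma tr_dot0 : totally_real F -> forall z : V, dot z z = 0 -> z = 0.
Proof.
move=> tr z hz; apply/rowP => k; rewrite mxE.
apply: (tr _ (fun i => z 0 i)); rewrite -{2}hz; apply: eq_bigr => i _; by rewrite expr2.
Qed.

Lemma partA : totally_real F -> (2%:R : F) != 0 -> forall lam (R : {linear V -> V}),
  RBc lam R -> is_trivial_RB lam R.
Proof.
move=> tr h2 lam R H.
set al : F := R ee 0 ord_max.
have Hperp (x y : V) : x 0 ord_max = 0 ->
   dot (R x) (R y) *: ee = (dot (R x) y + dot x (R y) + lam * dot x y) *: R ee.
  by move=> hx; rewrite H hx scale0r addr0.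
have dec (x : V) : R x = x 0 ord_max *: R ee + R (x - x 0 ord_max *: ee).
  by rewrite linearB linearZZ addrC subrK.
have decp (x : V) : (x - x 0 ord_max *: ee) 0 ord_max = 0.
  by rewrite !mxE ee_max mulr1 subrr.
have [Re|Rne] := eqVneq (R ee) (al *: ee).
  have hal : al * (al + lam) = 0.
    have := H ee ee; move/(congr1 (fun v : V => v 0 ord_max)).
    move=> E; rewrite Re [R (al *: ee)]linearZZ Re !dotZl !dotZr !dot_ee ee_max !mxE ee_max in E.
    have E2 : 2%:R * (al * (al + lam)) = 0.
      rewrite (_ : 2%:R * _ = ((al * 1 + al * 1 + lam * 1) * (al * 1) +
        1 * (al * (al * 1) + lam * (al * 1))) - al * (al * 1) * 1); last by ring.
      by rewrite -E subrr.
    by move/eqP: E2; rewrite mulf_eq0 (negbTE h2) => /eqP.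
  have Hxx (x : V) : x 0 ord_max = 0 ->
      dot (R x) (R x) = (dot (R x) x + dot x (R x) + lam * dot x x) * al.
    move=> hx; have := Hperp x x hx; rewrite Re scalerA.
    by move/(congr1 (fun v : V => v 0 ord_max)); rewrite !mxE ee_max !mulr1.
  move/eqP: hal; rewrite mulf_eq0 => /orP [/eqP a0|/eqP al0].
    left=> x; rewrite dec Re a0 scale0r scaler0 add0r.
    by apply: (tr_dot0 tr); rewrite Hxx ?decp // a0 mulr0.
  have al1 : al = - lam by rewrite -(subr0 al) -al0; ring.
  right=> x.
  have hp : R (x - x 0 ord_max *: ee) = - (lam *: (x - x 0 ord_max *: ee)).
    set x' := x - _.
    apply/eqP; rewrite -subr_eq0 opprK; apply/eqP; apply: (tr_dot0 tr).
    rewrite !dotDl !dotDr !dotZl !dotZr Hxx ?decp // al1 (dotC x' (R x')); ring.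
  rewrite dec hp Re al1; apply/rowP => k; rewrite !mxE; ring.
have Hs (c d : F) : c *: ee = d *: R ee -> c = 0 /\ d = 0.
  move=> E.
  have d0 : d = 0.
    case: (eqVneq d 0) => // dn0; exfalso; move/eqP: Rne; apply.
    have E' : R ee = (d^-1 * c) *: ee by rewrite -scalerA E scalerA mulVf // scale1r.
    by rewrite /al E' !mxE ee_max mulr1.
  split=> //; move: E; rewrite d0 scale0r => /(congr1 (fun v : V => v 0 ord_max)).
  by rewrite !mxE ee_max mulr1.
have Rx0 (x : V) : x 0 ord_max = 0 -> R x = 0.
  move=> hx; apply: (tr_dot0 tr); exact: (Hs _ _ (Hperp x x hx)).1.
exfalso; move/eqP: Rne; apply; apply/rowP => k.
case: (eqVneq k ord_max) => [->|nk]; first by rewrite !mxE ee_max mulr1.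
rewrite !mxE ee_ne // mulr0.
have hx : (delta_mx 0 k : V) 0 ord_max = 0.
  by rewrite mxE eq_sym (negbTE nk).
have := (Hs _ _ (Hperp _ ee hx)).2.
by rewrite Rx0 // !dot0l dot_deltal dot_deltal ee_ne // mulr0 add0r addr0.
Qed.

Lemma delta_same k : (delta_mx 0 k : V) 0 k = 1.
Proof. by rewrite mxE !eqxx. Qed.
Lemma delta_ne k l : k != l -> (delta_mx 0 k : V) 0 l = 0.
Proof. by move=> nkl; rewrite mxE eq_sym (negbTE nkl). Qed.

Definition rk1mx (j : 'I_m.+1) (f : V) : 'M[F]_m.+1 :=
  \matrix_(i, k) ((i == j)%:R * f 0 k).
Definition rk1 j f : {linear V -> V} := mulmxr (rk1mx j f).
Lemma rk1E j f x : rk1 j f x = x 0 j *: f.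
Proof.
apply/rowP => k; rewrite /= !mxE (bigD1 j) //= [X in _ + X]big1 ?addr0.
  by rewrite mxE eqxx mul1r.
by move=> i ni; rewrite mxE (negbTE ni) mul0r mulr0.
Qed.

Lemma rk1_RB lam j f : j != ord_max -> dot f f = 0 -> f 0 j = - lam ->
  RBc lam (rk1 j f).
Proof.
move=> jn ff fj x y; rewrite !rk1E !dotZl !dotZr ff ee_ne // scale0r.
apply/rowP => k; rewrite !mxE fj; ring.
Qed.
End S.

Unset Implicit Arguments.
Theorem corollary2 (F : fieldType) (hchar : (2%:R : F) != 0) :
  (totally_real F ->
     forall (m : nat) (lam : F) (R : {linear 'rV[F]_m.+1 -> 'rV[F]_m.+1}),
       is_RB lam R -> is_trivial_RB lam R)
  /\
  (quadratically_closed F ->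
     (forall (m : nat) (lam : F), (1 <= m)%N -> lam != 0 ->
        exists R : {linear 'rV[F]_m.+1 -> 'rV[F]_m.+1},
          is_RB lam R /\ ~ is_trivial_RB lam R)
     /\
     (forall m : nat, (2 <= m)%N ->
        exists R : {linear 'rV[F]_m.+1 -> 'rV[F]_m.+1},
          is_RB 0 R /\ exists x, R x != 0)).
Proof.
split.
  move=> tr m lam R /RB_iff H; exact: (partA tr hchar H).
move=> qc; have [s hs] := qc 1 0 1 (oner_neq0 F).
have hs2 : s ^+ 2 = -1.
  by apply/eqP; rewrite -subr_eq0 opprK; rewrite mul1r mul0r addr0 in hs; apply/eqP.
split.
  move=> m lam hm hl.
  pose j1 : 'I_m.+1 := Ordinal (ltn0Sn m).
  have j1n : j1 != ord_max by rewrite -val_eqE /= eq_sym -lt0n.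
  pose f : 'rV[F]_m.+1 := (lam * s) *: ee F m + (- lam) *: delta_mx 0 j1.
  have fj : f 0 j1 = - lam.
    by rewrite /f !mxE ee_ne // !eqxx /= mulr0 mulr1 add0r.
  have ff : dot f f = 0.
    rewrite /f !dotDl !dotDr !dotZl !dotZr !dot_ee ee_max !dot_deltal delta_same.
    rewrite dotC dot_ee delta_ne //.
    rewrite (_ : _ + _ = lam ^+ 2 * (s ^+ 2 + 1)); last by ring.
    by rewrite hs2 addNr mulr0.
  exists (rk1 j1 f); split; first by apply/RB_iff; exact: rk1_RB.
  case=> H.
    have := H (delta_mx 0 j1); rewrite rk1E delta_same scale1r => /(congr1 (fun v : 'rV[F]_m.+1 => v 0 j1)).
    rewrite fj mxE => /eqP; rewrite oppr_eq0; exact/negP.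
  have := H (ee F m); rewrite rk1E ee_ne // scale0r => /(congr1 (fun v : 'rV[F]_m.+1 => v 0 ord_max)).
  rewrite !mxE ee_max mulr1 => /esym/eqP; rewrite oppr_eq0; exact/negP.
move=> m hm.
pose j1 : 'I_m.+1 := Ordinal (ltn0Sn m).
have h1 : (1 < m.+1)%N by apply: leq_trans hm _.
pose j2 : 'I_m.+1 := Ordinal h1.
have j2n : j2 != ord_max by rewrite -val_eqE /= neq_ltn hm.
have j12 : j1 != j2 by rewrite -val_eqE.
have j1n : j1 != ord_max by rewrite -val_eqE /= eq_sym -lt0n; apply: ltnW.
pose f : 'rV[F]_m.+1 := ee F m + s *: delta_mx 0 j1.
have fj : f 0 j2 = - 0.
  by rewrite /f !mxE ee_ne // eq_sym (negbTE j12) andbF mulr0 addr0 oppr0.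
have ff : dot f f = 0.
  rewrite /f !dotDl !dotDr !dotZl !dotZr !dot_ee ee_max !dot_deltal delta_same.
  rewrite dotC dot_ee delta_ne //.
  rewrite (_ : _ + _ = s ^+ 2 + 1); last by ring.
  by rewrite hs2 addNr.
exists (rk1 j2 f); split; first by apply/RB_iff; exact: rk1_RB.
exists (delta_mx 0 j2); rewrite rk1E delta_same scale1r.
apply/eqP => /(congr1 (fun v : 'rV[F]_m.+1 => v 0 ord_max)).
rewrite /f !mxE ee_max eq_sym (negbTE j1n) andbF mulr0 addr0 => /eqP; exact/negP/oner_neq0.
Qed.
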